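(* Let $\mathbb{B}$ be a partial $\sigma^{brdg}$-structure. Then $\mathbb{B}$ is a partial substructure of some square-increasing brdg (one satisfying $x\leqslant x\circ x$) if and only if its $\{\wedge,\vee,0,1,\leqslant\}$-reduct is a partial bounded lattice and there exists a set $\mathcal F$ of prime filters of $\mathbb{B}$, each of which additionally satisfies (a) $a,b\in f$ and $(a,b)\in\mathrm{dom}(\circ^{\mathbb{B}})$ imply $a\circ^{\mathbb{B}}b\in f$, (b) $a\in f$, $a\backslash^{\mathbb{B}}b\in f$ with $(a,b)\in\mathrm{dom}(\backslash^{\mathbb{B}})$ imply $b\in f$, (c) $a/^{\mathbb{B}}b\in f$, $b\in f$ with $(a,b)\in\mathrm{dom}(/^{\mathbb{B}})$ imply $a\in f$, such that $\mathcal F$ satisfies (D), (M$_\circ$), (M$_\backslash$) and (M$_/$): (M$_\circ$) for all $h\in\mathcal F$ and $(a,b)\in\mathrm{dom}(\circ^{\mathbb{B}})$ with $a\circ^{\mathbb{B}}b\in h$ there are $f,g\in\mathcal F$ with $a\in f$, $b\in g$, $R^{\mathbb{B}}(f,g,h)$; (M$_\backslash$) for all $g\in\mathcal F$ and $(a,b)\in\mathrm{dom}(\backslash^{\mathbb{B}})$ with $a\backslash^{\mathbb{B}}b\notin g$ there are $f,h\in\mathcal F$ with $a\in f$, $b\notin h$, $R^{\mathbb{B}}(f,g,h)$; (M$_/$) for all $f\in\mathcal F$ and $(a,b)\in\mathrm{dom}(/^{\mathbb{B}})$ with $a/^{\mathbb{B}}b\notin f$ there are $g,h\in\mathcal F$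 with $b\in g$, $a\notin h$, $R^{\mathbb{B}}(f,g,h)$.
   Context: A brdg is an algebra $\langle A,\wedge,\vee,\circ,\backslash,/,0,1,\leqslant\rangle$ where $\langle A,\wedge,\vee,0,1\rangle$ is a bounded distributive lattice with natural order $\leqslant$ and $\circ,\backslash,/$ are binary operations with $x\circ y\leqslant z\iff y\leqslant x\backslash z\iff x\leqslant z/y$. The language $\sigma^{brdg}$ has binary operation symbols $\wedge,\vee,\circ,\backslash,/$, constants $0,1$ and relation symbol $\leqslant$. A partial $\sigma^{brdg}$-structure $\mathbb{B}$ consists of a nonempty set $B$, for each binary operation symbol $\delta$ a partial function $\delta^{\mathbb{B}}:\mathrm{dom}(\delta^{\mathbb{B}})\to B$ with $\mathrm{dom}(\delta^{\mathbb{B}})\subseteq B^2$, elements $0^{\mathbb{B}},1^{\mathbb{B}}\in B$ and a binary relation $\leqslant^{\mathbb{B}}$ on $B$. It is a partial substructure of $\mathbb{A}$ if $B\subseteq A$, each $\delta^{\mathbb{B}}$ agrees with $\delta^{\mathbb{A}}$ on its domain, constants coincide and $\leqslant^{\mathbb{B}}=\leqslant^{\mathbb{A}}\cap B^2$. The reduct is a partial bounded lattice if $\leqslant^{\mathbb{B}}$ is a partial order with least element $0^{\mathbb{B}}$ and greatest $1^{\mathbb{B}}$, and any defined $a\wedge^{\mathbb{B}}b$ (resp. $a\vee^{\mathbb{B}}b$) is the greatest lower (resp. least upper) bound of $\{a,b\}$ w.r.t. $\leqslant^{\mathbb{B}}$. A prime filter of $\mathbb{B}$ is $f\subseteq B$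 with $1^{\mathbb{B}}\in f$, $0^{\mathbb{B}}\notin f$, $f$ upward closed under $\leqslant^{\mathbb{B}}$, $a,b\in f$ and $a\wedge^{\mathbb{B}}b$ defined imply $a\wedge^{\mathbb{B}}b\in f$, and $a,b\notin f$ and $a\vee^{\mathbb{B}}b$ defined imply $a\vee^{\mathbb{B}}b\notin f$. Condition (D): for all $a,b\in B$ with $a\not\leqslant^{\mathbb{B}}b$ there is $f\in\mathcal F$ with $a\in f$, $b\notin f$. $R^{\mathbb{B}}(f,g,h)$ holds iff: for all $(a,b)\in\mathrm{dom}(\circ^{\mathbb{B}})$, $a\in f,b\in g$ imply $a\circ^{\mathbb{B}}b\in h$; for all $(a,b)\in\mathrm{dom}(\backslash^{\mathbb{B}})$, $a\in f, a\backslash^{\mathbb{B}}b\in g$ imply $b\in h$; for all $(a,b)\in\mathrm{dom}(/^{\mathbb{B}})$, $b/^{\mathbb{B}}a\in f$, $a\in g$ imply $b\in h$. *)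

(* Defs.v *)
(** A brdg: bounded distributive lattice with residuated binary operation
    (fusion [comp], left residual [ldiv] = \, right residual [rdiv] = /).
    The relation symbol <= is interpreted as the natural lattice order. *)
Record brdg := {
  car :> Type;
  bmeet : car -> car -> car;
  bjoin : car -> car -> car;
  bcomp : car -> car -> car;
  bldiv : car -> car -> car;
  brdiv : car -> car -> car;
  bzero : car;
  bone : car;
  meet_assoc : forall x y z, bmeet x (bmeet y z) = bmeet (bmeet x y) z;
  join_assoc : forall x y z, bjoin x (bjoin y z) = bjoin (bjoin x y) z;
  meet_comm : forall x y, bmeet x y = bmeet y x;
  join_comm : forall x y, bjoin x y = bjoin y x;
  meet_absorb : forall x y, bmeet x (bjoin x y) = x;
  join_absorb : forall x y, bjoin x (bmeet x y) = x;
  meet_distr : forall x y z, bmeet x (bjoin y z) = bjoin (bmeet x y) (bmeet x z);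
  join_zero : forall x, bjoin x bzero = x;
  meet_one : forall x, bmeet x bone = x;
  residuation : forall x y z,
    (bmeet (bcomp x y) z = bcomp x y <-> bmeet y (bldiv x z) = y) /\
    (bmeet y (bldiv x z) = y <-> bmeet x (brdiv z y) = x)
}.

Definition ble (A : brdg) (x y : A) : Prop := bmeet A x y = x.

Definition square_increasing (A : brdg) : Prop :=
  forall x : A, ble A x (bcomp A x x).

(** A partial sigma^brdg-structure: partial binary operations are
    option-valued; (a,b) is in the domain of an operation iff it returns Some. *)
Record pstruct := {
  pcar :> Type;
  pmeet : pcar -> pcar -> option pcar;
  pjoin : pcar -> pcar -> option pcar;
  pcomp : pcar -> pcar -> option pcar;
  pldiv : pcar -> pcar -> option pcar;
  prdiv : pcar -> pcar -> option pcar;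
  pzero : pcar;
  pone : pcar;
  ple : pcar -> pcar -> Prop
}.

(** [B] is (isomorphic to) a partial substructure of the brdg [A]:
    witnessed by an injective map [e] (identifying B with a subset of A). *)
Definition partial_substructure (B : pstruct) (A : brdg) : Prop :=
  exists e : B -> A,
    (forall x y, e x = e y -> x = y) /\
    (forall a b c, pmeet B a b = Some c -> e c = bmeet A (e a) (e b)) /\
    (forall a b c, pjoin B a b = Some c -> e c = bjoin A (e a) (e b)) /\
    (forall a b c, pcomp B a b = Some c -> e c = bcomp A (e a) (e b)) /\
    (forall a b c, pldiv B a b = Some c -> e c = bldiv A (e a) (e b)) /\
    (forall a b c, prdiv B a b = Some c -> e c = brdiv A (e a) (e b)) /\
    e (pzero B) = bzero A /\
    e (pone B) = bone A /\
    (forall a b, ple B a b <-> ble A (e a) (e b)).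

Definition partial_bounded_lattice (B : pstruct) : Prop :=
  (forall a, ple B a a) /\
  (forall a b, ple B a b -> ple B b a -> a = b) /\
  (forall a b c, ple B a b -> ple B b c -> ple B a c) /\
  (forall a, ple B (pzero B) a) /\
  (forall a, ple B a (pone B)) /\
  (forall a b c, pmeet B a b = Some c ->
     ple B c a /\ ple B c b /\ (forall d, ple B d a -> ple B d b -> ple B d c)) /\
  (forall a b c, pjoin B a b = Some c ->
     ple B a c /\ ple B b c /\ (forall d, ple B a d -> ple B b d -> ple B c d)).

Definition prime_filter (B : pstruct) (f : B -> Prop) : Prop :=
  f (pone B) /\ ~ f (pzero B) /\
  (forall a b, f a -> ple B a b -> f b) /\
  (forall a b c, pmeet B a b = Some c -> f a -> f b -> f c) /\
  (forall a b c, pjoin B a b = Some c -> ~ f a -> ~ f b -> ~ f c).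

Definition closed_filter (B : pstruct) (f : B -> Prop) : Prop :=
  (forall a b c, pcomp B a b = Some c -> f a -> f b -> f c) /\
  (forall a b c, pldiv B a b = Some c -> f a -> f c -> f b) /\
  (forall a b c, prdiv B a b = Some c -> f c -> f b -> f a).

Definition Rrel (B : pstruct) (f g h : B -> Prop) : Prop :=
  (forall a b c, pcomp B a b = Some c -> f a -> g b -> h c) /\
  (forall a b c, pldiv B a b = Some c -> f a -> g c -> h b) /\
  (forall a b c, prdiv B a b = Some c -> f c -> g b -> h a).

Definition condD (B : pstruct) (F : (B -> Prop) -> Prop) : Prop :=
  forall a b, ~ ple B a b -> exists f, F f /\ f a /\ ~ f b.

Definition condMcomp (B : pstruct) (F : (B -> Prop) -> Prop) : Prop :=
  forall h a b c, F h -> pcomp B a b = Some c -> h c ->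
    exists f g, F f /\ F g /\ f a /\ g b /\ Rrel B f g h.

Definition condMldiv (B : pstruct) (F : (B -> Prop) -> Prop) : Prop :=
  forall g a b c, F g -> pldiv B a b = Some c -> ~ g c ->
    exists f h, F f /\ F h /\ f a /\ ~ h b /\ Rrel B f g h.

Definition condMrdiv (B : pstruct) (F : (B -> Prop) -> Prop) : Prop :=
  forall f a b c, F f -> prdiv B a b = Some c -> ~ f c ->
    exists g h, F g /\ F h /\ g b /\ ~ h a /\ Rrel B f g h.

(* Main.v *)
Require Import Defs.
From Stdlib Require Import Classical FunctionalExtensionality PropExtensionality.
From mathcomp Require classical_sets.

Lemma zorn_sets (T : Type) (P : (T -> Prop) -> Prop) :
  (forall C : (T -> Prop) -> Prop, (forall X, C X -> P X) ->
     (forall X Y, C X -> C Y -> (forall t, X t -> Y t) \/ (forall t, Y t -> X t)) ->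
     P (fun t => exists2 X, C X & X t)) ->
  exists A, P A /\ forall B, (forall t, A t -> B t) -> P B -> forall t, B t -> A t.
Proof.
  intros H.
  destruct (@classical_sets.Zorn_bigcup T P) as [A [PA HA]].
  - intros C HC Htot. apply H; [exact HC|exact Htot].
  - exists A; split; [exact PA|].
    intros B AB PB t Bt.
    apply NNPP; intro nA.
    apply (HA B); [|exact PB].
    split; [exact AB|]. intro BA. apply nA. exact (BA t Bt).
Qed.

Section Lat.
Variable A : brdg.
Implicit Types x y z u v w : A.

Lemma meet_idem x : bmeet A x x = x.
Proof. pose proof (meet_absorb A x (bmeet A x x)) as H. rewrite join_absorb in H. exact H. Qed.
Lemma le_refl x : ble A x x. Proof. apply meet_idem. Qed.
Lemma le_trans x y z : ble A x y -> ble A y z -> ble A x z.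
Proof. unfold ble; intros H1 H2. rewrite <- H1 at 1. rewrite <- meet_assoc, H2. exact H1. Qed.
Lemma le_antisym x y : ble A x y -> ble A y x -> x = y.
Proof. unfold ble; intros H1 H2. rewrite <- H1 at 1. rewrite meet_comm. exact H2. Qed.
Lemma meet_lb1 x y : ble A (bmeet A x y) x.
Proof. unfold ble. rewrite meet_comm, meet_assoc, meet_idem. reflexivity. Qed.
Lemma meet_lb2 x y : ble A (bmeet A x y) y.
Proof. unfold ble. rewrite <- meet_assoc, meet_idem. reflexivity. Qed.
Lemma meet_glb z x y : ble A z x -> ble A z y -> ble A z (bmeet A x y).
Proof. unfold ble; intros H1 H2. rewrite meet_assoc, H1, H2. reflexivity. Qed.
Lemma join_ub1 x y : ble A x (bjoin A x y). Proof. apply meet_absorb. Qed.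
Lemma join_ub2 x y : ble A y (bjoin A x y). Proof. unfold ble. rewrite join_comm. apply meet_absorb. Qed.
Lemma join_lub x y z : ble A x z -> ble A y z -> ble A (bjoin A x y) z.
Proof. unfold ble; intros H1 H2. rewrite meet_comm, meet_distr.
  rewrite (meet_comm A z x), H1, (meet_comm A z y), H2. reflexivity. Qed.
Lemma zero_le x : ble A (bzero A) x.
Proof. unfold ble. pose proof (meet_absorb A (bzero A) x) as e.
  rewrite join_comm, join_zero in e. exact e. Qed.
Lemma le_one x : ble A x (bone A). Proof. apply meet_one. Qed.

Lemma res1 x y z : ble A (bcomp A x y) z <-> ble A y (bldiv A x z).
Proof. apply (residuation A). Qed.
Lemma res2 x y z : ble A (bcomp A x y) z <-> ble A x (brdiv A z y).
Proof. destruct (residuation A x y z) as [H1 H2]. unfold ble. tauto. Qed.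
Lemma comp_mono_r x y y' : ble A y y' -> ble A (bcomp A x y) (bcomp A x y').
Proof. intro H. apply res1. apply le_trans with y'; [exact H|]. apply res1, le_refl. Qed.
Lemma comp_mono_l x x' y : ble A x x' -> ble A (bcomp A x y) (bcomp A x' y).
Proof. intro H. apply res2. apply le_trans with x'; [exact H|]. apply res2, le_refl. Qed.
Lemma comp_mono x x' y y' : ble A x x' -> ble A y y' -> ble A (bcomp A x y) (bcomp A x' y').
Proof. intros H1 H2. apply le_trans with (bcomp A x' y); [apply comp_mono_l|apply comp_mono_r]; assumption. Qed.
Lemma comp_ldiv x z : ble A (bcomp A x (bldiv A x z)) z.
Proof. apply res1, le_refl. Qed.
Lemma comp_rdiv y z : ble A (bcomp A (brdiv A z y) y) z.
Proof. apply res2, le_refl. Qed.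
Lemma comp_join_l u1 u2 v : ble A (bcomp A (bjoin A u1 u2) v) (bjoin A (bcomp A u1 v) (bcomp A u2 v)).
Proof. apply res2; apply join_lub; apply res2; [apply join_ub1|apply join_ub2]. Qed.
Lemma comp_join_r u v1 v2 : ble A (bcomp A u (bjoin A v1 v2)) (bjoin A (bcomp A u v1) (bcomp A u v2)).
Proof. apply res1; apply join_lub; apply res1; [apply join_ub1|apply join_ub2]. Qed.
Lemma comp_zero_l v : ble A (bcomp A (bzero A) v) (bzero A).
Proof. apply res2, zero_le. Qed.
Lemma comp_zero_r u : ble A (bcomp A u (bzero A)) (bzero A).
Proof. apply res1, zero_le. Qed.

Definition filt (P : A -> Prop) := (exists x, P x) /\ (forall x y, P x -> ble A x y -> P y) /\
  (forall x y, P x -> P y -> P (bmeet A x y)).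
Definition pfilt (P : A -> Prop) := filt P /\ ~ P (bzero A) /\ (forall x y, P (bjoin A x y) -> P x \/ P y).
Definition idl (I : A -> Prop) := (exists x, I x) /\ (forall x y, I y -> ble A x y -> I x) /\
  (forall x y, I x -> I y -> I (bjoin A x y)).

Lemma up_filt x : filt (fun u => ble A x u).
Proof. split; [exists x; apply le_refl|split].
  - intros a b H1 H2. eapply le_trans; eassumption.
  - intros; apply meet_glb; assumption. Qed.
Lemma down_idl x : idl (fun u => ble A u x).
Proof. split; [exists x; apply le_refl|split].
  - intros a b H1 H2. eapply le_trans; eassumption.
  - intros; apply join_lub; assumption. Qed.
Lemma pfilt_filt P : pfilt P -> filt P. Proof. intros [H _]; exact H. Qed.
Lemma pfilt_one P : pfilt P -> P (bone A).
Proof. intros [[[x Px] [Hu _]] _]. apply (Hu x); [exact Px|apply le_one]. Qed.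

Lemma gen_filt G a : filt G -> G a \/ (exists g, G g) ->
  filt (fun z => exists g, G g /\ ble A (bmeet A g a) z).
Proof.
  intros [[x0 Gx0] [Gu Gm]] _. split; [|split].
  - exists (bmeet A x0 a). exists x0. split; [exact Gx0|apply le_refl].
  - intros z z' [g [Gg Hg]] H. exists g; split; [exact Gg|eapply le_trans; eassumption].
  - intros z1 z2 [g1 [G1 H1]] [g2 [G2 H2]]. exists (bmeet A g1 g2). split; [apply Gm; assumption|].
    apply meet_glb.
    + eapply le_trans; [|exact H1]. apply meet_glb; [|apply meet_lb2].
      eapply le_trans; [apply meet_lb1|apply meet_lb1].
    + eapply le_trans; [|exact H2]. apply meet_glb; [|apply meet_lb2].
      eapply le_trans; [apply meet_lb1|apply meet_lb2].
Qed.

Lemma pft Fl I : filt Fl -> idl I -> (forall x, Fl x -> I x -> False) ->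
  exists P, pfilt P /\ (forall x, Fl x -> P x) /\ (forall x, P x -> I x -> False).
Proof.
  intros HFl HI Hdis.
  destruct HFl as [[f0 Ff0] [Fu Fm]].
  set (Q := fun X : A -> Prop => filt (fun t => X t \/ Fl t) /\ (forall t, X t \/ Fl t -> I t -> False)).
  destruct (zorn_sets A Q) as [A0 [QA0 maxA0]].
  - intros C HC Htot. split; [split; [|split]|].
    + exists f0; right; exact Ff0.
    + intros x y [[X CX Xx]|Fx] Hxy.
      * destruct (HC X CX) as [[_ [Xu _]] _].
        destruct (Xu x y (or_introl Xx) Hxy) as [Xy|Fy]; [left; exists X; assumption|right; exact Fy].
      * right; exact (Fu x y Fx Hxy).
    + intros x y [[X CX Xx]|Fx] [[Y CY Yy]|Fy].
      * destruct (Htot X Y CX CY) as [XY|YX].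
        -- destruct (HC Y CY) as [[_ [_ Ym]] _].
           destruct (Ym x y (or_introl (XY x Xx)) (or_introl Yy)) as [H|H]; [left; exists Y; assumption|right; exact H].
        -- destruct (HC X CX) as [[_ [_ Xm]] _].
           destruct (Xm x y (or_introl Xx) (or_introl (YX y Yy))) as [H|H]; [left; exists X; assumption|right; exact H].
      * destruct (HC X CX) as [[_ [_ Xm]] _].
        destruct (Xm x y (or_introl Xx) (or_intror Fy)) as [H|H]; [left; exists X; assumption|right; exact H].
      * destruct (HC Y CY) as [[_ [_ Ym]] _].
        destruct (Ym x y (or_intror Fx) (or_introl Yy)) as [H|H]; [left; exists Y; assumption|right; exact H].
      * right; apply Fm; assumption.
    + intros t [[X CX Xt]|Ft] It.
      * destruct (HC X CX) as [_ Xd]. exact (Xd t (or_introl Xt) It).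
      * exact (Hdis t Ft It).
  - set (G := fun t => A0 t \/ Fl t).
    destruct QA0 as [HG HGd].
    assert (Hmax : forall G', filt G' -> (forall t, G t -> G' t) -> (forall t, G' t -> I t -> False) ->
                   forall t, G' t -> G t).
    { intros G' [[g0 G0] [G'u G'm]] HGG' HG'd t G't. left.
      apply (maxA0 G'); [intros s As; apply HGG'; left; exact As| |exact G't].
      split; [split; [|split]|].
      - exists g0; left; exact G0.
      - intros x y [H|H] Hxy; left; apply (G'u x y); try assumption. apply HGG'; right; exact H.
      - intros x y Hx Hy; left; apply G'm;
        [destruct Hx as [H|H]; [exact H|apply HGG'; right; exact H]
        |destruct Hy as [H|H]; [exact H|apply HGG'; right; exact H]].
      - intros s [H|H] Is; [exact (HG'd s H Is)|exact (Hdis s H Is)]. }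
    destruct HG as [HGne [HGu HGm]].
    exists G. split; [split; [split; [exact HGne|split; assumption]|split]|split].
    + intro G0. destruct HI as [[i0 Ii0] [Id _]].
      exact (HGd _ G0 (Id _ _ Ii0 (zero_le i0))).
    + intros a b Gab.
      destruct (classic (G a)) as [Ga|nGa]; [left; exact Ga|].
      destruct (classic (G b)) as [Gb|nGb]; [right; exact Gb|].
      exfalso.
      assert (Hfa : filt G) by (split; [exact HGne|split; assumption]).
      assert (Ha : exists g, G g /\ I (bmeet A g a)).
      { apply NNPP; intro Hn. apply nGa.
        apply (Hmax (fun z => exists g, G g /\ ble A (bmeet A g a) z)).
        - apply gen_filt; [exact Hfa|right; exists (bjoin A a b); exact Gab].
        - intros t Gt. exists t. split; [exact Gt|apply meet_lb1].
        - intros t [g [Gg Hg]] It. apply Hn. exists g. split; [exact Gg|].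
          destruct HI as [_ [Id _]]. exact (Id _ _ It Hg).
        - exists (bjoin A a b). split; [exact Gab|apply meet_lb2]. }
      assert (Hb : exists g, G g /\ I (bmeet A g b)).
      { apply NNPP; intro Hn. apply nGb.
        apply (Hmax (fun z => exists g, G g /\ ble A (bmeet A g b) z)).
        - apply gen_filt; [exact Hfa|right; exists (bjoin A a b); exact Gab].
        - intros t Gt. exists t. split; [exact Gt|apply meet_lb1].
        - intros t [g [Gg Hg]] It. apply Hn. exists g. split; [exact Gg|].
          destruct HI as [_ [Id _]]. exact (Id _ _ It Hg).
        - exists (bjoin A a b). split; [exact Gab|apply meet_lb2]. }
      destruct Ha as [g1 [G1 I1]]. destruct Hb as [g2 [G2 I2]].
      destruct HI as [_ [Id Ij]].
      apply (HGd (bmeet A (bmeet A g1 g2) (bjoin A a b))).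
      * apply HGm; [apply HGm; assumption|exact Gab].
      * apply (Id _ _ (Ij _ _ I1 I2)).
        rewrite meet_distr. apply join_lub.
        -- eapply le_trans; [|apply join_ub1]. apply meet_glb; [|apply meet_lb2].
           eapply le_trans; [apply meet_lb1|apply meet_lb1].
        -- eapply le_trans; [|apply join_ub2]. apply meet_glb; [|apply meet_lb2].
           eapply le_trans; [apply meet_lb1|apply meet_lb2].
    + intros x Fx; right; exact Fx.
    + exact HGd.
Qed.

End Lat.

Section Ext.
Variable A : brdg.

Definition RA (P Q S : A -> Prop) := forall u v, P u -> Q v -> S (bcomp A u v).

Lemma ext_left (Q Ph : A -> Prop) x : filt A Q -> pfilt A Ph ->
  (forall v, Q v -> Ph (bcomp A x v)) -> exists Pf, pfilt A Pf /\ Pf x /\ RA Pf Q Ph.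
Proof.
  intros HQ HPh Hx.
  destruct HQ as [[q0 Qq0] [Qu Qm]].
  destruct HPh as [[_ [Pu Pm]] [P0 Pp]].
  destruct (pft A (fun u => ble A x u) (fun u => exists v, Q v /\ ~ Ph (bcomp A u v)))
    as [Pf [HPf [HFl Hd]]].
  - apply up_filt.
  - split; [|split].
    + exists (bzero A), q0. split; [exact Qq0|]. intro H. apply P0.
      exact (Pu _ _ H (comp_zero_l A q0)).
    + intros u u' [v [Qv Hv]] Hle. exists v. split; [exact Qv|]. intro H. apply Hv.
      exact (Pu _ _ H (comp_mono_l A _ _ _ Hle)).
    + intros u1 u2 [v1 [Q1 H1]] [v2 [Q2 H2]]. exists (bmeet A v1 v2). split; [apply Qm; assumption|].
      intro H. apply Pu with (y := bjoin A (bcomp A u1 (bmeet A v1 v2)) (bcomp A u2 (bmeet A v1 v2))) in H;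
        [|apply comp_join_l].
      destruct (Pp _ _ H) as [H'|H'].
      * apply H1. exact (Pu _ _ H' (comp_mono_r A _ _ _ (meet_lb1 A _ _))).
      * apply H2. exact (Pu _ _ H' (comp_mono_r A _ _ _ (meet_lb2 A _ _))).
  - intros u Hxu [v [Qv Hv]]. apply Hv. exact (Pu _ _ (Hx v Qv) (comp_mono_l A _ _ _ Hxu)).
  - exists Pf. split; [exact HPf|split; [apply HFl, le_refl|]].
    intros u v Pfu Qv. apply NNPP. intro Hn. apply (Hd u Pfu). exists v. split; assumption.
Qed.

Lemma ext_right (P Ph : A -> Prop) y : filt A P -> pfilt A Ph ->
  (forall u, P u -> Ph (bcomp A u y)) -> exists Pg, pfilt A Pg /\ Pg y /\ RA P Pg Ph.
Proof.
  intros HP HPh Hy.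
  destruct HP as [[p0 Pp0] [PPu PPm]].
  destruct HPh as [[_ [Pu Pm]] [P0 Pp]].
  destruct (pft A (fun v => ble A y v) (fun v => exists u, P u /\ ~ Ph (bcomp A u v)))
    as [Pg [HPg [HFl Hd]]].
  - apply up_filt.
  - split; [|split].
    + exists (bzero A), p0. split; [exact Pp0|]. intro H. apply P0.
      exact (Pu _ _ H (comp_zero_r A p0)).
    + intros v v' [u [Pu' Hv]] Hle. exists u. split; [exact Pu'|]. intro H. apply Hv.
      exact (Pu _ _ H (comp_mono_r A _ _ _ Hle)).
    + intros v1 v2 [u1 [P1 H1]] [u2 [P2 H2]]. exists (bmeet A u1 u2). split; [apply PPm; assumption|].
      intro H. apply Pu with (y := bjoin A (bcomp A (bmeet A u1 u2) v1) (bcomp A (bmeet A u1 u2) v2)) in H;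
        [|apply comp_join_r].
      destruct (Pp _ _ H) as [H'|H'].
      * apply H1. exact (Pu _ _ H' (comp_mono_l A _ _ _ (meet_lb1 A _ _))).
      * apply H2. exact (Pu _ _ H' (comp_mono_l A _ _ _ (meet_lb2 A _ _))).
  - intros v Hyv [u [Pu' Hv]]. apply Hv. exact (Pu _ _ (Hy u Pu') (comp_mono_r A _ _ _ Hyv)).
  - exists Pg. split; [exact HPg|split; [apply HFl, le_refl|]].
    intros u v Pu' Pgv. apply NNPP. intro Hn. apply (Hd v Pgv). exists u. split; assumption.
Qed.

Lemma ext_top (P Q : A -> Prop) z : filt A P -> filt A Q ->
  (forall u v, P u -> Q v -> ~ ble A (bcomp A u v) z) ->
  exists Ph, pfilt A Ph /\ ~ Ph z /\ RA P Q Ph.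
Proof.
  intros HP HQ Hz.
  destruct HP as [[p0 Pp0] [PPu PPm]].
  destruct HQ as [[q0 Qq0] [Qu Qm]].
  destruct (pft A (fun w => exists u v, P u /\ Q v /\ ble A (bcomp A u v) w) (fun w => ble A w z))
    as [Ph [HPh [HFl Hd]]].
  - split; [|split].
    + exists (bcomp A p0 q0), p0, q0. split; [exact Pp0|split; [exact Qq0|apply le_refl]].
    + intros w w' [u [v [Pu [Qv H]]]] Hle. exists u, v. split; [exact Pu|split; [exact Qv|eapply le_trans; eassumption]].
    + intros w1 w2 [u1 [v1 [P1 [Q1 H1]]]] [u2 [v2 [P2 [Q2 H2]]]].
      exists (bmeet A u1 u2), (bmeet A v1 v2). split; [apply PPm; assumption|split; [apply Qm; assumption|]].
      apply meet_glb.
      * eapply le_trans; [|exact H1]. apply comp_mono; apply meet_lb1.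
      * eapply le_trans; [|exact H2]. apply comp_mono; apply meet_lb2.
  - apply down_idl.
  - intros w [u [v [Pu [Qv H]]]] Hw. apply (Hz u v Pu Qv). eapply le_trans; eassumption.
  - exists Ph. split; [exact HPh|split].
    + intro H. exact (Hd z H (le_refl A z)).
    + intros u v Pu Qv. apply HFl. exists u, v. split; [exact Pu|split; [exact Qv|apply le_refl]].
Qed.

End Ext.

Lemma forward (B : pstruct) (A : brdg) : square_increasing A -> partial_substructure B A ->
  (partial_bounded_lattice B /\
   exists F : (B -> Prop) -> Prop,
     (forall f, F f -> prime_filter B f /\ closed_filter B f) /\
     condD B F /\ condMcomp B F /\ condMldiv B F /\ condMrdiv B F).
Proof.
  intros Hsq [e [inj [hm [hj [hc [hl [hr [h0 [h1 hle]]]]]]]]].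
  split.
  { split; [|split; [|split; [|split; [|split; [|split]]]]].
    - intro a. apply hle, le_refl.
    - intros a b H1 H2. apply inj, le_antisym; apply hle; assumption.
    - intros a b c H1 H2. apply hle. eapply le_trans; apply hle; eassumption.
    - intro a. apply hle. rewrite h0. apply zero_le.
    - intro a. apply hle. rewrite h1. apply le_one.
    - intros a b c H. rewrite !hle, (hm _ _ _ H). split; [apply meet_lb1|split; [apply meet_lb2|]].
      intros d H1 H2. apply hle. rewrite (hm _ _ _ H). apply meet_glb; apply hle; assumption.
    - intros a b c H. rewrite !hle, (hj _ _ _ H). split; [apply join_ub1|split; [apply join_ub2|]].
      intros d H1 H2. apply hle. rewrite (hj _ _ _ H). apply join_lub; apply hle; assumption. }
  exists (fun f => exists P, pfilt A P /\ forall b, f b <-> P (e b)).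
  assert (HR : forall (f g h : B -> Prop) P Q S,
             (forall b, f b <-> P (e b)) -> (forall b, g b <-> Q (e b)) -> (forall b, h b <-> S (e b)) ->
             pfilt A S -> RA A P Q S -> Rrel B f g h).
  { intros f g h P Q S Hf Hg Hh [[_ [Su _]] _] HRA. split; [|split].
    - intros a b c H fa gb. apply Hh. rewrite (hc _ _ _ H). apply HRA; [apply Hf|apply Hg]; assumption.
    - intros a b c H fa gc. apply Hh. apply (Su (bcomp A (e a) (bldiv A (e a) (e b)))); [|apply comp_ldiv].
      apply HRA; [apply Hf; exact fa|]. rewrite <- (hl _ _ _ H). apply Hg; exact gc.
    - intros a b c H fc gb. apply Hh. apply (Su (bcomp A (brdiv A (e a) (e b)) (e b))); [|apply comp_rdiv].
      apply HRA; [|apply Hg; exact gb]. rewrite <- (hr _ _ _ H). apply Hf; exact fc. }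
  split; [|split; [|split; [|split]]].
  - intros f [P [HP Hf]].
    destruct HP as [[Pne [Pu Pm]] [P0 Pp]] eqn:HPe.
    split; [split; [|split; [|split; [|split]]]|split; [|split]].
    + apply Hf. rewrite h1. apply (pfilt_one A P HP).
    + rewrite Hf, h0. exact P0.
    + intros a b fa Hab. apply Hf. apply (Pu (e a)); [apply Hf; exact fa|apply hle; exact Hab].
    + intros a b c H fa fb. apply Hf. rewrite (hm _ _ _ H). apply Pm; apply Hf; assumption.
    + intros a b c H na nb fc. apply Hf in fc. rewrite (hj _ _ _ H) in fc.
      destruct (Pp _ _ fc) as [H'|H']; [apply na|apply nb]; apply Hf; exact H'.
    + intros a b c H fa fb. apply Hf. rewrite (hc _ _ _ H).
      set (w := bmeet A (e a) (e b)).
      apply (Pu w); [apply Pm; apply Hf; assumption|].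
      eapply le_trans; [apply Hsq|]. apply comp_mono; [apply meet_lb1|apply meet_lb2].
    + intros a b c H fa fc. apply Hf.
      set (w := bmeet A (e a) (e c)).
      apply (Pu w); [apply Pm; apply Hf; assumption|].
      eapply le_trans; [apply Hsq|]. eapply le_trans; [|apply (comp_ldiv A (e a) (e b))].
      rewrite <- (hl _ _ _ H). apply comp_mono; [apply meet_lb1|apply meet_lb2].
    + intros a b c H fc fb. apply Hf.
      set (w := bmeet A (e c) (e b)).
      apply (Pu w); [apply Pm; apply Hf; assumption|].
      eapply le_trans; [apply Hsq|]. eapply le_trans; [|apply (comp_rdiv A (e b) (e a))].
      rewrite <- (hr _ _ _ H). apply comp_mono; [apply meet_lb1|apply meet_lb2].
  - intros a b Hab.
    destruct (pft A (fun u => ble A (e a) u) (fun u => ble A u (e b))) as [P [HP [H1 H2]]].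
    + apply up_filt.
    + apply down_idl.
    + intros x H1 H2. apply Hab. apply hle. eapply le_trans; eassumption.
    + exists (fun b => P (e b)). split; [exists P; split; [exact HP|tauto]|split].
      * apply H1, le_refl.
      * intro H. exact (H2 _ H (le_refl A _)).
  - intros h a b c [Ph [HPh Hh]] H hcc.
    apply Hh in hcc. rewrite (hc _ _ _ H) in hcc.
    destruct (ext_left A (fun v => ble A (e b) v) Ph (e a)) as [Pf [HPf [Pfa R1]]].
    + apply up_filt.
    + exact HPh.
    + intros v Hv. destruct HPh as [[_ [Pu _]] _]. exact (Pu _ _ hcc (comp_mono_r A _ _ _ Hv)).
    + destruct (ext_right A Pf Ph (e b)) as [Pg [HPg [Pgb R2]]].
      * apply pfilt_filt, HPf.
      * exact HPh.
      * intros u Pfu. apply R1; [exact Pfu|apply le_refl].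
      * exists (fun x => Pf (e x)), (fun x => Pg (e x)).
        split; [exists Pf; split; [exact HPf|tauto]|].
        split; [exists Pg; split; [exact HPg|tauto]|].
        split; [exact Pfa|split; [exact Pgb|]].
        apply (HR _ _ _ Pf Pg Ph); first [exact R2 | tauto].
  - intros g a b c [Pg [HPg Hg]] H ngc.
    rewrite Hg, (hl _ _ _ H) in ngc.
    destruct (ext_top A (fun u => ble A (e a) u) Pg (e b)) as [Ph [HPh [Phb R1]]].
    + apply up_filt.
    + apply pfilt_filt, HPg.
    + intros u v Hu Pgv Hle. apply ngc. destruct HPg as [[_ [Pu _]] _].
      apply (Pu v); [exact Pgv|]. apply res1. eapply le_trans; [|exact Hle]. apply comp_mono_l, Hu.
    + destruct (ext_left A Pg Ph (e a)) as [Pf [HPf [Pfa R2]]].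
      * apply pfilt_filt, HPg.
      * exact HPh.
      * intros v Pgv. apply R1; [apply le_refl|exact Pgv].
      * exists (fun x => Pf (e x)), (fun x => Ph (e x)).
        split; [exists Pf; split; [exact HPf|tauto]|].
        split; [exists Ph; split; [exact HPh|tauto]|].
        split; [exact Pfa|split; [exact Phb|]].
        apply (HR _ _ _ Pf Pg Ph); first [exact R2 | tauto].
  - intros f a b c [Pf [HPf Hf]] H nfc.
    rewrite Hf, (hr _ _ _ H) in nfc.
    destruct (ext_top A Pf (fun v => ble A (e b) v) (e a)) as [Ph [HPh [Pha R1]]].
    + apply pfilt_filt, HPf.
    + apply up_filt.
    + intros u v Pfu Hv Hle. apply nfc. destruct HPf as [[_ [Pu _]] _].
      apply (Pu u); [exact Pfu|]. apply res2. eapply le_trans; [|exact Hle]. apply comp_mono_r, Hv.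
    + destruct (ext_right A Pf Ph (e b)) as [Pg [HPg [Pgb R2]]].
      * apply pfilt_filt, HPf.
      * exact HPh.
      * intros u Pfu. apply R1; [exact Pfu|apply le_refl].
      * exists (fun x => Pg (e x)), (fun x => Ph (e x)).
        split; [exists Pg; split; [exact HPg|tauto]|].
        split; [exists Ph; split; [exact HPh|tauto]|].
        split; [exact Pgb|split; [exact Pha|]].
        apply (HR _ _ _ Pf Pg Ph); first [exact R2 | tauto].
Qed.

Lemma setext (T : Type) (X Y : T -> Prop) : (forall p, X p <-> Y p) -> X = Y.
Proof. intro H. apply functional_extensionality. intro p. apply propositional_extensionality, H. Qed.

Lemma meet_eq (T : Type) (X Y : T -> Prop) : (fun p => X p /\ Y p) = X <-> (forall p, X p -> Y p).
Proof. split.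
  - intros H p Xp. pose proof (equal_f H p) as H0. simpl in H0.
    assert (X p /\ Y p) as [_ Yp] by (rewrite H0; exact Xp). exact Yp.
  - intro H. apply setext. intro p. split; [tauto|]. intro Xp; split; [exact Xp|apply H, Xp]. Qed.

Section Cons.
Variable B : pstruct.
Variable F : (B -> Prop) -> Prop.
Definition Sset := { f : B -> Prop | F f }.
Definition RS (f g h : Sset) := Rrel B (proj1_sig f) (proj1_sig g) (proj1_sig h).
Definition cmeet (X Y : Sset -> Prop) := fun p => X p /\ Y p.
Definition cjoin (X Y : Sset -> Prop) := fun p => X p \/ Y p.
Definition ccomp (X Y : Sset -> Prop) := fun h => exists f g, X f /\ Y g /\ RS f g h.
Definition cldiv (X Z : Sset -> Prop) := fun g => forall f h, RS f g h -> X f -> Z h.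
Definition crdiv (Z Y : Sset -> Prop) := fun f => forall g h, RS f g h -> Y g -> Z h.

Lemma cres x y z :
    (cmeet (ccomp x y) z = ccomp x y <-> cmeet y (cldiv x z) = y) /\
    (cmeet y (cldiv x z) = y <-> cmeet x (crdiv z y) = x).
Proof.
  unfold cmeet. rewrite !meet_eq. unfold ccomp, cldiv, crdiv. split; split.
  - intros H g yg f h R xf. apply H. exists f, g. tauto.
  - intros H h [f [g [xf [yg R]]]]. exact (H g yg f h R xf).
  - intros H f xf g h R yg. exact (H g yg f h R xf).
  - intros H g yg f h R xf. exact (H f xf g h R yg).
Qed.

Definition cA : brdg.
Proof.
  refine {| car := Sset -> Prop; bmeet := cmeet; bjoin := cjoin; bcomp := ccomp;
            bldiv := cldiv; brdiv := crdiv; bzero := fun _ => False; bone := fun _ => True;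
            residuation := cres |};
  intros; apply setext; unfold cmeet, cjoin; intros; tauto.
Defined.

End Cons.

Lemma backward (B : pstruct) :
  (partial_bounded_lattice B /\
   exists F : (B -> Prop) -> Prop,
     (forall f, F f -> prime_filter B f /\ closed_filter B f) /\
     condD B F /\ condMcomp B F /\ condMldiv B F /\ condMrdiv B F) ->
  (exists A : brdg, square_increasing A /\ partial_substructure B A).
Proof.
  intros [[Prefl [Panti [Ptrans [P0 [P1 [Pm Pj]]]]]] [F [HF [HD [Mc [Ml Mr]]]]]].
  exists (cA B F). split.
  - intro X. unfold ble. simpl. apply meet_eq. intros h Xh.
    exists h, h. split; [exact Xh|split; [exact Xh|]].
    destruct h as [h Fh]. unfold RS; simpl.
    destruct (HF h Fh) as [_ [Hc [Hl Hr]]]. split; [|split]; intros a b c H; eauto.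
  - exists (fun a (p : Sset B F) => proj1_sig p a).
    assert (Hle : forall a b, ple B a b <-> ble (cA B F) (fun p : Sset B F => proj1_sig p a) (fun p => proj1_sig p b)).
    { intros a b. unfold ble. simpl. unfold cmeet. rewrite meet_eq. split.
      - intros H [f Ff] fa. simpl in *. destruct (HF f Ff) as [[_ [_ [Hu _]]] _]. eauto.
      - intro H. apply NNPP. intro Hn. destruct (HD a b Hn) as [f [Ff [fa nfb]]].
        apply nfb. exact (H (exist _ f Ff) fa). }
    split; [|split; [|split; [|split; [|split; [|split; [|split; [|split]]]]]]].
    + intros a b H. apply Panti; apply Hle; rewrite H; apply Hle; apply Prefl.
    + intros a b c H. apply setext. intros [f Ff]. simpl. unfold cmeet; simpl.
      destruct (HF f Ff) as [[_ [_ [Hu [Hm _]]]] _].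
      destruct (Pm a b c H) as [ca [cb _]]. split.
      * intro fc. split; eauto.
      * intros [fa fb]. eauto.
    + intros a b c H. apply setext. intros [f Ff]. simpl. unfold cjoin; simpl.
      destruct (HF f Ff) as [[_ [_ [Hu [_ Hj]]]] _].
      destruct (Pj a b c H) as [ac [bc _]]. split.
      * intro fc. apply NNPP. intro Hn. apply (Hj a b c H); tauto.
      * intros [fa|fb]; eauto.
    + intros a b c H. apply setext. intros [h Fh]. simpl. unfold ccomp; simpl. split.
      * intro hc. destruct (Mc h a b c Fh H hc) as [f [g [Ff [Fg [fa [gb R]]]]]].
        exists (exist _ f Ff), (exist _ g Fg). simpl. auto.
      * intros [[f Ff] [[g Fg] [fa [gb [R _ ]]]]]. simpl in *. eauto.
    + intros a b c H. apply setext. intros [g Fg]. simpl. unfold cldiv; simpl. split.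
      * intros gc [f Ff] [h Fh] [_ [R _]] fa. simpl in *. eauto.
      * intro Hall. apply NNPP. intro ngc.
        destruct (Ml g a b c Fg H ngc) as [f [h [Ff [Fh [fa [nhb R]]]]]].
        apply nhb. exact (Hall (exist _ f Ff) (exist _ h Fh) R fa).
    + intros a b c H. apply setext. intros [f Ff]. simpl. unfold crdiv; simpl. split.
      * intros fc [g Fg] [h Fh] [_ [_ R]] gb. simpl in *. eauto.
      * intro Hall. apply NNPP. intro nfc.
        destruct (Mr f a b c Ff H nfc) as [g [h [Fg [Fh [gb [nha R]]]]]].
        apply nha. exact (Hall (exist _ g Fg) (exist _ h Fh) R gb).
    + apply setext. intros [f Ff]. simpl. destruct (HF f Ff) as [[_ [H0 _]] _]. tauto.
    + apply setext. intros [f Ff]. simpl. destruct (HF f Ff) as [[H1 _] _]. tauto.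
    + exact Hle.
Qed.

Theorem mainTheorem15 (B : pstruct) :
  (exists A : brdg, square_increasing A /\ partial_substructure B A) <->
  (partial_bounded_lattice B /\
   exists F : (B -> Prop) -> Prop,
     (forall f, F f -> prime_filter B f /\ closed_filter B f) /\
     condD B F /\ condMcomp B F /\ condMldiv B F /\ condMrdiv B F).
Proof.
  split.
  - intros [A [H1 H2]]. exact (forward B A H1 H2).
  - exact (backward B).
Qed.
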